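(* For the additive noise model with $N$ items and $K$ defectives, random Bernoulli$(1/K)$ design and maximum-likelihood decoding, in the regime $N,K\to\infty$ with $K=o(N)$, a number of tests $T=O\!\left(\frac{K\log N}{1-q}\right)$ is achievable (arbitrarily small average error probability), where $q\in[0,1)$ is the parameter of the Bernoulli noise.
   Context: Design: $N\times T$ binary matrix with i.i.d. Bernoulli$(1/K)$ entries, $X_j(t)=1$ iff item $j$ is in test $t$. Additive noise model: for defective set $S$ ($|S|=K$), $Y(t)=\left(\bigvee_{j\in S}X_j(t)\right)\vee W(t)$ where $W(1),\dots,W(T)$ are i.i.d. Bernoulli$(q)$, independent of the design. The ML decoder chooses a $K$-subset $S'$ maximizing $p(Y^T\mid\mathbf X_{S'})$. Average error probability is averaged over the design, the noise, and $S$ uniform among $K$-subsets. *)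

(* Defs.v *)
From HB Require Import structures.
From mathcomp Require Import all_boot all_order all_algebra.
From mathcomp Require Import all_classical all_reals all_analysis.
Set Implicit Arguments. Unset Strict Implicit. Unset Printing Implicit Defensive.
Import Order.TTheory GRing.Theory Num.Theory.
Local Open Scope ring_scope.

(* A test design: X j t = true iff item j is in test t. *)
Definition design (N T : nat) := {ffun 'I_N -> {ffun 'I_T -> bool}}.
Definition outcomes (T : nat) := {ffun 'I_T -> bool}.

Definition bern {R : realType} (p : R) (b : bool) : R := if b then p else 1 - p.

Definition design_prob {R : realType} (N K T : nat) (X : design N T) : R :=
  \prod_(j < N) \prod_(t < T) bern (K%:R^-1) (X j t).

Definition noise_prob {R : realType} (T : nat) (q : R) (W : outcomes T) : R :=
  \prod_(t < T) bern q (W t).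

Definition orS (N T : nat) (X : design N T) (S : {set 'I_N}) (t : 'I_T) : bool :=
  [exists j in S, X j t].

Definition outcome (N T : nat) (S : {set 'I_N}) (X : design N T) (W : outcomes T)
  : outcomes T := [ffun t => orS X S t || W t].

Definition lik {R : realType} (N T : nat) (q : R) (X : design N T)
  (S : {set 'I_N}) (Y : outcomes T) : R :=
  \prod_(t < T) (if orS X S t then (if Y t then 1 else 0) else bern q (Y t)).

Definition is_ML_decoder {R : realType} (N K T : nat) (q : R)
  (dec : design N T -> outcomes T -> {set 'I_N}) : Prop :=
  forall (X : design N T) (Y : outcomes T),
    #|dec X Y| = K /\
    forall S' : {set 'I_N}, #|S'| = K -> lik q X S' Y <= lik q X (dec X Y) Y.

Definition avg_error {R : realType} (N K T : nat) (q : R)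
  (dec : design N T -> outcomes T -> {set 'I_N}) : R :=
  (#|[set S : {set 'I_N} | #|S| == K]|%:R)^-1 *
  \sum_(S : {set 'I_N} | #|S| == K)
    \sum_(X : design N T) \sum_(W : outcomes T)
      design_prob K X * noise_prob q W *
      (if dec X (outcome S X W) != S then 1 else 0).

(* Main.v *)
Require Import Defs.
From HB Require Import structures.
From mathcomp Require Import all_boot all_order all_algebra.
From mathcomp Require Import all_classical all_reals all_analysis.
From mathcomp Require Import ring lra.
Import numFieldNormedType.Exports.
Import numFieldNormedType.Exports.
Import Order.TTheory GRing.Theory Num.Theory.
Local Open Scope ring_scope.
Set Implicit Arguments. Unset Strict Implicit.

Section Core.
Variable R : realType.

Lemma bern_ge0 (q : R) b : 0 <= q -> q <= 1 -> 0 <= bern q b.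
Proof. by move=> q0 q1; case: b => //=; rewrite subr_ge0. Qed.

Lemma sum_bern (q : R) : \sum_b bern q b = 1.
Proof. by rewrite big_bool /= addrC subrK. Qed.

Lemma lik_ge0 (N T : nat) (q : R) (X : design N T) S Y :
  0 <= q -> q <= 1 -> 0 <= lik q X S Y.
Proof.
move=> q0 q1; apply: prodr_ge0 => t _.
by case: ifP => _; [case: ifP | exact: bern_ge0].
Qed.

Lemma ml_correct (N K T : nat) (q : R) dec (S : {set 'I_N})
  (X : design N T) (W : outcomes T) :
  0 <= q -> q < 1 -> is_ML_decoder K q dec -> #|S| = K ->
  noise_prob q W != 0 ->
  (forall j, j \notin S -> exists t, X j t && ~~ outcome S X W t) ->
  dec X (outcome S X W) = S.
Proof.
move=> q0 q1 ML cS nW H.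
set Y := outcome S X W.
have [cD MLD] := ML X Y.
have bW t : bern q (W t) != 0.
  by apply: contra nW => h; apply/prodf_eq0; exists t.
have likS : lik q X S Y != 0.
  rewrite /lik; apply/prodf_eq0 => -[t _].
  rewrite /Y /outcome ffunE.
  case: (orS X S t) => //=.
  by rewrite oner_eq0.
  by move=> h; move: (bW t); rewrite h.
have likD : lik q X (dec X Y) Y != 0.
  have := MLD S cS; have := @lik_ge0 _ _ q X S Y q0 (ltW q1).
  move=> h1 h2; rewrite gt_eqF //; apply: lt_le_trans h2.
  by rewrite lt0r likS.
apply/eqP; rewrite eqEcard cD cS leqnn andbT.
apply/fintype.subsetP => j jD; apply/negPn/negP => jS.
have [t /andP [Xjt Yt]] := H j jS.
move/negP: likD; apply; rewrite /lik; apply/prodf_eq0.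
exists t => //.
have -> : orS X (dec X Y) t by apply/existsP; exists j; rewrite jD.
by rewrite (negbTE Yt).
Qed.


Lemma design_prob_ge0 (N K T : nat) (X : design N T) : 0 <= design_prob K X :> R.
Proof.
apply: prodr_ge0 => j _; apply: prodr_ge0 => t _; apply: bern_ge0.
  by rewrite invr_ge0.
case: K => [|k]; first by rewrite invr0.
by rewrite invf_le1 // ler1n.
Qed.

Lemma noise_prob_ge0 (T : nat) (q : R) (W : outcomes T) :
  0 <= q -> q <= 1 -> 0 <= noise_prob q W.
Proof. by move=> q0 q1; apply: prodr_ge0 => t _; apply: bern_ge0. Qed.

Definition ind (N T : nat) (S : {set 'I_N}) (X : design N T) (W : outcomes T)
  (j : 'I_N) : R :=
  \prod_(t < T) (if X j t && ~~ orS X S t && ~~ W t then 0 else 1).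

Lemma ind_ge0 (N T : nat) (S : {set 'I_N}) (X : design N T) (W : outcomes T) (j : 'I_N) : 0 <= ind S X W j.
Proof. by apply: prodr_ge0 => t _; case: ifP. Qed.

Lemma err_ind (N K T : nat) (q : R) dec (S : {set 'I_N})
  (X : design N T) (W : outcomes T) :
  0 <= q -> q < 1 -> is_ML_decoder K q dec -> #|S| = K ->
  design_prob K X * noise_prob q W *
      (if dec X (outcome S X W) != S then 1 else 0)
  <= \sum_(j | j \notin S) design_prob K X * noise_prob q W * ind S X W j.
Proof.
move=> q0 q1 ML cS.
have dp0 := design_prob_ge0 K X.
have np0 := noise_prob_ge0 W q0 (ltW q1).
have sum0 : 0 <= \sum_(j | j \notin S) design_prob K X * noise_prob q W * ind S X W j.
  by apply: sumr_ge0 => j _; rewrite !mulr_ge0 // ind_ge0.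
have [E|neq] := eqVneq (dec X (outcome S X W)) S.
  by rewrite /= mulr0.
rewrite /= mulr1; move/eqP: neq => neq.
have [nW0|nW] := eqVneq (noise_prob q W) 0.
  by rewrite {1}nW0 mulr0.
case: (boolP [exists j, (j \notin S) &&
   [forall t, ~~ (X j t && ~~ outcome S X W t)]]).
  move/existsP => [j /andP [jS /forallP Hj]].
  rewrite (bigD1 j) //=.
  have -> : ind S X W j = 1.
    apply: big1 => t _; move: (Hj t); rewrite /outcome ffunE negb_or.
    by move=> h; rewrite -andbA (negbTE h).
  rewrite mulr1 lerDl; apply: sumr_ge0 => i _; by rewrite !mulr_ge0 // ind_ge0.
rewrite negb_exists => /forallP H.
exfalso; apply: neq; apply: (ml_correct q0 q1 ML cS nW) => j jS.
move: (H j); rewrite jS /= negb_forall => /existsP [t]; rewrite negbK => h.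
by exists t.
Qed.

Definition hh (N : nat) (p q : R) (S : {set 'I_N}) (j : 'I_N)
  (x : {ffun 'I_N -> bool} * bool) : R :=
  (\prod_i bern p (x.1 i)) * bern q x.2 *
  (if x.1 j && ~~ [exists i in S, x.1 i] && ~~ x.2 then 0 else 1).

Definition cc (N : nat) (S : {set 'I_N}) (j i : 'I_N) (b : bool) : R :=
  if i == j then (b%:R) else if i \in S then (~~ b)%:R else 1.

Lemma E_prod (N : nat) (S : {set 'I_N}) (j : 'I_N) (a : {ffun 'I_N -> bool}) :
  j \notin S ->
  (a j && ~~ [exists i in S, a i])%:R = \prod_i cc S j i (a i) :> R.
Proof.
move=> jS.
case: (boolP (a j && ~~ [exists i in S, a i])) => [/andP [aj /existsPn na]|hE].
  rewrite /= big1 // => i _; rewrite /cc; case: eqP => [->|_]; first by rewrite aj.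
  by case: ifP => // iS; move: (na i); rewrite iS /= => /negbTE ->.
apply/esym/eqP; apply/prodf_eq0.
move: hE; rewrite negb_and negbK => /orP [aj|/existsP [i /andP [iS ai]]].
  by exists j => //; rewrite /cc eqxx (negbTE aj).
exists i => //; rewrite /cc ai iS /=.
by case: (eqVneq i j) => [ij|//]; move: jS; rewrite -ij iS.
Qed.

Lemma hh_sum (N : nat) (p q : R) (S : {set 'I_N}) (j : 'I_N) : j \notin S ->
  \sum_x hh p q S j x = 1 - p * (1 - p) ^+ #|S| * (1 - q).
Proof.
move=> jS.
transitivity (\sum_a \sum_w hh p q S j (a, w)).
  by rewrite pair_bigA; apply: eq_bigr => -[].
set P := fun a : {ffun 'I_N -> bool} => \prod_i bern p (a i).
set E := fun a : {ffun 'I_N -> bool} => a j && ~~ [exists i in S, a i].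
have step : forall a, \sum_w hh p q S j (a, w) = P a - (1 - q) * (P a * (E a)%:R).
  move=> a; rewrite big_bool /hh /= -/(P a) -/(E a) andbF andbT.
  by case: (E a) => /=; rewrite ?mulr1 ?mulr0; ring.
rewrite (eq_bigr _ (fun a _ => step a)) sumrB -mulr_sumr.
have -> : \sum_a P a = 1.
  rewrite /P -(bigA_distr_bigA (fun (i : 'I_N) (b : bool) => bern p b)) /=.
  by rewrite big1 // => i _; rewrite sum_bern.
have -> : \sum_a P a * (E a)%:R = p * (1 - p) ^+ #|S|.
  have e1 : forall a, P a * (E a)%:R = \prod_i (bern p (a i) * cc S j i (a i)).
    by move=> a; rewrite big_split /= /E E_prod.
  rewrite (eq_bigr _ (fun a _ => e1 a)).
  rewrite -(bigA_distr_bigA (fun (i : 'I_N) (b : bool) => bern p b * cc S j i b)) /=.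
  have e2 : forall i, \sum_b bern p b * cc S j i b =
      if i == j then p else if i \in S then 1 - p else 1.
    move=> i; rewrite big_bool /= /cc; case: eqP => _ /=.
      by rewrite mulr1 mulr0 addr0.
    by case: ifP => _ /=; rewrite ?mulr1 ?mulr0 ?add0r ?addr0 // addrC subrK.
  rewrite (eq_bigr _ (fun i _ => e2 i)) (bigD1 j) //= eqxx; congr (_ * _).
  rewrite (eq_bigr (fun i => if i \in S then 1 - p else 1)); last first.
    by move=> i /negbTE ->.
  rewrite -big_mkcondr /= (eq_bigl (fun i => i \in S)); last first.
    move=> i /=; case: eqP => [->|]; first by rewrite (negbTE jS).
    by [].
  by rewrite prodr_const.
by rewrite mulrC.
Qed.

Definition phi (N T : nat) (F : {ffun 'I_T -> {ffun 'I_N -> bool} * bool}) :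
  design N T * outcomes T :=
  ([ffun i => [ffun t => (F t).1 i]], [ffun t => (F t).2]).
Definition psi (N T : nat) (XW : design N T * outcomes T) :
  {ffun 'I_T -> {ffun 'I_N -> bool} * bool} :=
  [ffun t => ([ffun i => XW.1 i t], XW.2 t)].

Lemma phiK (N T : nat) : cancel (@phi N T) (@psi N T).
Proof.
move=> F; apply/ffunP => t; rewrite ffunE /=.
case E: (F t) => [a w]; congr (_, _); last by rewrite ffunE E.
by apply/ffunP => i; rewrite !ffunE E.
Qed.

Lemma psiK (N T : nat) : cancel (@psi N T) (@phi N T).
Proof.
move=> [X W]; rewrite /phi /=; congr (_, _).
  by apply/ffunP => i; apply/ffunP => t; rewrite !ffunE.
by apply/ffunP => t; rewrite !ffunE.
Qed.

Lemma ind_sum (N K T : nat) (q : R) (S : {set 'I_N}) (j : 'I_N) : j \notin S ->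
  \sum_(X : design N T) \sum_(W : outcomes T)
     design_prob K X * noise_prob q W * ind S X W j
  = (1 - K%:R^-1 * (1 - K%:R^-1) ^+ #|S| * (1 - q)) ^+ T.
Proof.
move=> jS.
rewrite pair_bigA /= (reindex (@phi N T)); last first.
  by apply: onW_bij; exists (@psi N T); [apply: phiK | apply: psiK].
transitivity (\sum_(F : {ffun 'I_T -> {ffun 'I_N -> bool} * bool})
   \prod_t hh K%:R^-1 q S j (F t)).
  apply: eq_bigr => F _.
  rewrite /hh /design_prob /noise_prob /ind !big_split /=.
  rewrite exchange_big /=.
  congr (_ * _ * _).
  - by apply: eq_bigr => t _; apply: eq_bigr => i _; rewrite !ffunE.
  - by apply: eq_bigr => t _; rewrite ffunE.
  apply: eq_bigr => t _; rewrite !ffunE /orS.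
  congr (if _ && ~~ _ && _ then _ else _).
  by apply/existsP/existsP => -[i /andP [iS h]]; exists i; rewrite iS /=;
     move: h; rewrite !ffunE.
rewrite -(bigA_distr_bigA (fun (t : 'I_T) x => hh K%:R^-1 q S j x)) /=.
rewrite hh_sum // big_const card_ord.
elim: T => //= n ->; by rewrite exprS.
Qed.

Lemma errS (N K T : nat) (q : R) dec (S : {set 'I_N}) :
  (1 <= K)%N -> 0 <= q -> q < 1 -> is_ML_decoder K q dec -> #|S| = K ->
  \sum_(X : design N T) \sum_(W : outcomes T)
     design_prob K X * noise_prob q W *
      (if dec X (outcome S X W) != S then 1 else 0)
  <= N%:R * expR (- (K%:R^-1 * (1 - K%:R^-1) ^+ K * (1 - q) * T%:R)).
Proof.
move=> K1 q0 q1 ML cS.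
set r := K%:R^-1 * (1 - K%:R^-1) ^+ K * (1 - q).
have p0 : 0 <= K%:R^-1 :> R by rewrite invr_ge0.
have p1 : K%:R^-1 <= 1 :> R by rewrite invf_le1 ?ler1n // ltr0n.
have a0 : 0 <= 1 - K%:R^-1 :> R by rewrite subr_ge0.
have a1 : 1 - K%:R^-1 <= 1 :> R by rewrite lerBlDr lerDl.
have b0 : 0 <= 1 - q by rewrite subr_ge0 ltW.
have b1 : 1 - q <= 1 by rewrite lerBlDr lerDl.
have c0 : 0 <= (1 - K%:R^-1) ^+ K :> R by rewrite exprn_ge0.
have c1 : (1 - K%:R^-1) ^+ K <= 1 :> R by rewrite exprn_ile1.
have r0 : 0 <= r by rewrite /r !mulr_ge0.
have r1 : r <= 1 by rewrite /r !mulr_ile1 ?mulr_ge0.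
apply: le_trans (_ : _ <= \sum_(X : design N T) \sum_(W : outcomes T)
    \sum_(j | j \notin S) design_prob K X * noise_prob q W * ind S X W j) _.
  by apply: ler_sum => X _; apply: ler_sum => W _; exact: err_ind.
under eq_bigr do rewrite exchange_big /=.
rewrite exchange_big /=.
rewrite (eq_bigr (fun _ => (1 - r) ^+ T)) => [|j jS]; last by rewrite ind_sum // cS.
apply: le_trans (_ : _ <= \sum_(j < N) (1 - r) ^+ T) _.
  rewrite [X in _ <= X](bigID (fun j => j \notin S)) /= lerDl.
  by apply: sumr_ge0 => j _; rewrite exprn_ge0 // subr_ge0.
rewrite sumr_const card_ord -[(1 - r) ^+ T *+ N]mulr_natl ler_wpM2l // -(mulNr r) expRM_natr.
apply: lerXn2r; rewrite ?nnegrE ?subr_ge0 ?expR_ge0 //.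
exact: expR_ge1Dx.
Qed.

Lemma avg_bound (N K T : nat) (q : R)
  (dec : design N T -> outcomes T -> {set 'I_N}) :
  (1 <= K)%N -> (K <= N)%N -> 0 <= q -> q < 1 -> is_ML_decoder K q dec ->
  avg_error K q dec
  <= N%:R * expR (- (K%:R^-1 * (1 - K%:R^-1) ^+ K * (1 - q) * T%:R)).
Proof.
move=> K1 KN q0 q1 ML.
set B := N%:R * _.
rewrite /avg_error.
set A := [set S : {set 'I_N} | #|S| == K].
have cA : #|A| = 'C(N, K) by rewrite card_draws card_ord.
have cA0 : (#|A|%:R : R) != 0 by rewrite pnatr_eq0 -lt0n cA bin_gt0.
apply: le_trans (_ : _ <= #|A|%:R^-1 * \sum_(S in A) B) _.
  rewrite ler_wpM2l ?invr_ge0 //.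
  rewrite (eq_bigl (fun S => S \in A)) => [|S]; last by rewrite inE.
  apply: ler_sum => S; rewrite inE => /eqP cS.
  exact: errS.
by rewrite sumr_const -[B *+ #|A|]mulr_natl mulrA mulVf // mul1r.
Qed.

Lemma expN_le (x : R) : 0 <= x < 1 -> expR (- (x / (1 - x))) <= 1 - x.
Proof.
move=> /andP [x0 x1].
have px : 0 < 1 - x by rewrite subr_gt0.
have e : 1 + x / (1 - x) = (1 - x)^-1.
  by field; rewrite subr_eq0 eq_sym lt_eqF.
rewrite expRN -[leRHS]invrK lef_pV2 ?posrE ?expR_gt0 ?invr_gt0 //.
by apply: le_trans (expR_ge1Dx _); rewrite e.
Qed.

Lemma pow_lb (K : nat) : (2 <= K)%N -> expR (-2) <= (1 - K%:R^-1) ^+ K :> R.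
Proof.
move=> K2.
set x : R := K%:R^-1.
have K0 : 0 < K%:R :> R by rewrite ltr0n (leq_trans _ K2).
have x0 : 0 <= x by rewrite invr_ge0 ltW.
have x2 : x <= 2^-1.
  rewrite /x lef_pV2 ?posrE ?ltr0n ?(leq_trans _ K2) //.
  by have : (2%:R : R) <= K%:R by rewrite ler_nat.
have x1 : x < 1 by apply: le_lt_trans x2 _; rewrite invf_lt1 ?ltr1n.
apply: le_trans (_ : expR (- (x / (1 - x))) ^+ K <= _); last first.
  apply: lerXn2r; rewrite ?nnegrE ?expR_ge0 ?subr_ge0 ?(ltW x1) //.
  by apply: expN_le; rewrite x0.
rewrite -expRM_natr ler_expR mulNr lerN2.
have -> : x / (1 - x) * K%:R = (1 - x)^-1.
  rewrite /x; field; rewrite ?pnatr_eq0 -?lt0n ?(gt_eqF K0) //.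
  by rewrite (leq_trans _ K2) //= subr_eq0 pnatr_eq1 gtn_eqF.
rewrite -[leLHS]mul1r ler_pdivrMr ?subr_gt0 //.
lra.
Qed.

Definition CC : R := 2 * expR 2.

Lemma x_ge0 (N K : nat) (q : R) : q < 1 -> 0 <= CC * K%:R * ln (N%:R) / (1 - q).
Proof.
move=> q1; apply: divr_ge0; last by rewrite subr_ge0 ltW.
rewrite !mulr_ge0 ?expR_ge0 //.
case: N => [|n]; first by rewrite ln0.
by rewrite ln_ge0 // ler1n.
Qed.

Lemma final_bound (N K : nat) (q : R) : 0 <= q -> q < 1 -> (2 <= K)%N ->
  (1 <= N)%N ->
  N%:R * expR (- (K%:R^-1 * (1 - K%:R^-1) ^+ K * (1 - q) *
     (Num.trunc (CC * K%:R * ln (N%:R) / (1 - q)))%:R))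
  <= expR 1 / N%:R.
Proof.
move=> q0 q1 K2 N1.
set T := Num.trunc _.
set L := ln (N%:R : R).
set x := CC * K%:R * L / (1 - q).
have K0 : 0 < K%:R :> R by rewrite ltr0n (leq_trans _ K2).
have N0 : 0 < N%:R :> R by rewrite ltr0n.
have L0 : 0 <= L by rewrite ln_ge0 // ler1n.
have b0 : 0 < 1 - q by rewrite subr_gt0.
set r0 := K%:R^-1 * expR (-2) * (1 - q).
have r00 : 0 <= r0 by rewrite !mulr_ge0 ?invr_ge0 ?expR_ge0 ?ltW.
have i0 : 0 <= K%:R^-1 :> R by rewrite invr_ge0 ltW.
have i1 : K%:R^-1 <= 1 :> R by rewrite invf_le1 // ler1n (leq_trans _ K2).
have e0 : 0 <= expR (-2) :> R by rewrite expR_ge0.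
have e1 : expR (-2) <= 1 :> R by rewrite expR_le1 oppr_le0.
have b1 : 1 - q <= 1 by rewrite lerBlDr lerDl.
have b0' : 0 <= 1 - q by rewrite ltW.
have r01 : r0 <= 1 by rewrite /r0 !mulr_ile1 ?mulr_ge0.
have rr : r0 <= K%:R^-1 * (1 - K%:R^-1) ^+ K * (1 - q).
  by apply: ler_wpM2r => //; apply: ler_wpM2l => //; exact: pow_lb.
have Tx : x - 1 <= T%:R.
  by rewrite lerBlDr natr1; exact: ltW (truncnS_gt _).
have r0x : r0 * x = 2 * L.
  rewrite /r0 /x /CC expRN; field.
  by rewrite (gt_eqF K0) (gt_eqF b0) (gt_eqF (expR_gt0 _)).
have key : 2 * L - 1 <= K%:R^-1 * (1 - K%:R^-1) ^+ K * (1 - q) * T%:R.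
  apply: le_trans (_ : r0 * T%:R <= _); last first.
    by rewrite ler_wpM2r.
  apply: le_trans (_ : r0 * (x - 1) <= _); last by rewrite ler_wpM2l.
  by rewrite mulrBr r0x mulr1 lerB.
apply: le_trans (_ : N%:R * expR (1 - 2 * L) <= _).
  by rewrite ler_wpM2l ?ler0n // ler_expR lerNl opprB.
rewrite expRD expRN -[2]/(2%:R) expRM_natl /L lnK ?posrE //.
rewrite mulrC -mulrA ler_wpM2l ?expR_ge0 //.
by rewrite expr2 invfM -mulrA mulVf ?gt_eqF // mulr1.
Qed.
End Core.

Local Open Scope classical_set_scope.
Local Open Scope ring_scope.

Lemma ev_of (P : nat -> Prop) :
  (exists n0, forall n, (n0 <= n)%N -> P n) -> \forall n \near \oo%classic, P n.
Proof. by move=> [n0 H]; exists n0. Qed.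

Lemma avg_ge0 (R : realType) (N K T : nat) (q : R)
  (dec : design N T -> outcomes T -> {set 'I_N}) :
  0 <= q -> q <= 1 -> 0 <= avg_error K q dec.
Proof.
move=> q0 q1; rewrite /avg_error mulr_ge0 ?invr_ge0 //.
apply: sumr_ge0 => S _; apply: sumr_ge0 => X _; apply: sumr_ge0 => W _.
rewrite !mulr_ge0 ?design_prob_ge0 ?noise_prob_ge0 //.
by case: ifP.
Qed.

Theorem theorem7 (R : realType) :
  exists C : R, 0 < C /\
  forall (q : R), 0 <= q -> q < 1 ->
  forall (N K : nat -> nat),
    (forall M : nat, exists n0 : nat, forall n, (n0 <= n)%N -> (M <= N n)%N) ->
    (forall M : nat, exists n0 : nat, forall n, (n0 <= n)%N -> (M <= K n)%N) ->
    (fun n : nat => ((K n)%:R / (N n)%:R : R)) @ \oo --> 0%R ->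
    exists T : nat -> nat,
      (forall n, (T n)%:R <= C * (K n)%:R * ln ((N n)%:R) / (1 - q)) /\
      forall dec : forall n, design (N n) (T n) -> outcomes (T n) -> {set 'I_(N n)},
        (forall n, (K n <= N n)%N -> is_ML_decoder (K n) q (dec n)) ->
        (fun n : nat => avg_error (K n) q (dec n)) @ \oo --> 0%R.
Proof.
exists (CC R); split; first by rewrite /CC mulr_gt0 ?expR_gt0.
move=> q q0 q1 N K HN HK HKN.
exists (fun n => Num.trunc (CC R * (K n)%:R * ln ((N n)%:R) / (1 - q))).
split; first by move=> n; rewrite truncn_le; exact: x_ge0.
move=> dec ML.
have hKN : \forall n \near \oo, `|(K n)%:R / (N n)%:R| < 1 :> R.
  by apply: cvgr0_norm_lt.

have hK := ev_of (HK 2).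
have hN := ev_of (HN 1).
apply: (@squeeze_cvgr _ _ _ _ (fun=> 0) (fun n => expR 1 / (N n)%:R)).
- near=> n.
  have K2 : (2 <= K n)%N by near: n.
  have N1 : (1 <= N n)%N by near: n.
  have KN : (K n <= N n)%N.
    have : `|(K n)%:R / (N n)%:R| < 1 :> R by near: n.
    rewrite ger0_norm ?divr_ge0 // ltr_pdivrMr ?ltr0n // mul1r ltr_nat.
    exact: ltnW.
  rewrite avg_ge0 ?(ltW q1) //=.
  apply: le_trans (avg_bound (leq_trans _ K2) KN q0 q1 (ML n KN)) _ => //.
  exact: final_bound.
- exact: cvg_cst.
- apply/cvgrPdist_lt => eps eps0.
  have hM := ev_of (HN (Num.trunc (expR 1 / eps)).+1).
  near=> n.
  have NM : ((Num.trunc (expR 1 / eps)).+1 <= N n)%N by near: n.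
  have N0 : 0 < (N n)%:R :> R by rewrite ltr0n (leq_trans _ NM).
  rewrite sub0r normrN ger0_norm ?divr_ge0 ?expR_ge0 //.
  rewrite ltr_pdivrMr // -ltr_pdivrMl // mulrC.
  apply: lt_le_trans (truncnS_gt _) _.
  by rewrite ler_nat.
Unshelve. all: end_near.
Qed.
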